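(* Let $N,M\ge1$, $h_1,h_2>0$, $\varepsilon>0$, and set $\lambda_1=e^{-h_1/\varepsilon}$, $\lambda_2=e^{-h_2/\varepsilon}$. Let $K_0\in\mathbb{R}^{N\times N}$ have entries $(K_0)_{ij}=\lambda_1^{|i-j|}$ and let $K\in\mathbb{R}^{NM\times NM}$ be the block matrix whose $(a,b)$ block ($a,b=1,\dots,M$) is $\lambda_2^{|a-b|}K_0$. For $\boldsymbol{\psi}\in\mathbb{R}^{NM}$ written in blocks $\boldsymbol{\psi}=(\boldsymbol{\psi}_1;\dots;\boldsymbol{\psi}_M)$ with $\boldsymbol{\psi}_i\in\mathbb{R}^N$, define $$\boldsymbol{p}_1=K_0\boldsymbol{\psi}_1,\quad \boldsymbol{p}_{k+1}=\lambda_2\boldsymbol{p}_k+K_0\boldsymbol{\psi}_{k+1}\ (k=1,\dots,M-1),$$ $$\boldsymbol{q}_M=\mathbf{0}_N,\quad \boldsymbol{q}_k=\lambda_2(\boldsymbol{q}_{k+1}+K_0\boldsymbol{\psi}_{k+1})\ (k=M-1,\dots,1).$$ Then the $k$-th block of $K\boldsymbol{\psi}$ equals $\boldsymbol{p}_k+\boldsymbol{q}_k$ for each $k=1,\dots,M$, and, computing each product $K_0\boldsymbol{\psi}_i$ by the linear-time recursion $r_1=\psi_{1},\ r_{j+1}=\lambda_1 r_j+\psi_{j+1}$, $s_N=0,\ s_j=\lambda_1(s_{j+1}+\psi_{j+1})$, $(K_0\boldsymbol{\psi}_i)_j=r_j+s_j$, the product $K\boldsymbol{\psi}$ can be computed exactly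 with $O(NM)$ arithmetic operations.
   Context: $K$ is the Sinkhorn kernel for the entropy-regularized discrete 2D Wasserstein-1 problem on a uniform $N\times M$ grid with spacings $h_1,h_2$ (cost $|i_1-i_2|h_1+|j_1-j_2|h_2$, regularization $\varepsilon\sum\Gamma\ln\Gamma$), with distributions flattened in column-major order, so $K_{(i_1,j_1),(i_2,j_2)}=\lambda_1^{|i_1-i_2|}\lambda_2^{|j_1-j_2|}$. *)

(* Defs.v *)
From HB Require Import structures.
From mathcomp Require Import all_boot all_order all_algebra.
From mathcomp Require Import reals.
From mathcomp Require Import sequences exp.
Set Implicit Arguments. Unset Strict Implicit. Unset Printing Implicit Defensive.
Import Order.TTheory GRing.Theory Num.Theory.
Local Open Scope ring_scope.

Definition ndist (a b : nat) : nat := ((a - b) + (b - a))%N.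

(* Matrices.  N = n.+1, M = m.+1 (so N, M >= 1).  Indices are 0-based. *)

Definition K0mx (R : nzRingType) (n : nat) (lam1 : R) : 'M[R]_n.+1 :=
  \matrix_(i, j) lam1 ^+ ndist i j.

(* Flat index x : 'I_(M*N) corresponds to block a = x %/ N, row i = x %% N
   (x = a*N + i, i.e. column-major flattening of an N x M grid). *)
Definition Kmx (R : nzRingType) (n m : nat) (lam1 lam2 : R) : 'M[R]_(m.+1 * n.+1) :=
  \matrix_(x, y) (lam2 ^+ ndist (x %/ n.+1) (y %/ n.+1)
                   * K0mx n lam1 (inord (x %% n.+1)) (inord (y %% n.+1))).

(* k-th block (0-based, k : nat, k <= m) of psi : R^{NM}; entry i is the
   flat index k*N + i = mxvec_index k i. *)
Definition psiblk (R : nzRingType) (n m : nat) (psi : 'cV[R]_(m.+1 * n.+1))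
  (k : nat) : 'cV[R]_n.+1 :=
  \col_i psi (mxvec_index (inord k : 'I_m.+1) i) 0.

Fixpoint pvec (R : nzRingType) (n m : nat) (lam1 lam2 : R)
  (psi : 'cV[R]_(m.+1 * n.+1)) (k : nat) : 'cV[R]_n.+1 :=
  match k with
  | 0 => K0mx n lam1 *m psiblk psi 0
  | k'.+1 => lam2 *: pvec lam1 lam2 psi k' + K0mx n lam1 *m psiblk psi k'.+1
  end.

(* backward helper: qaux d = q_{M-d} (0-based: q at index m - d) *)
Fixpoint qaux (R : nzRingType) (n m : nat) (lam1 lam2 : R)
  (psi : 'cV[R]_(m.+1 * n.+1)) (d : nat) : 'cV[R]_n.+1 :=
  match d with
  | 0 => 0
  | d'.+1 => lam2 *: (qaux lam1 lam2 psi d' + K0mx n lam1 *m psiblk psi (m - d'))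
  end.

Definition qvec (R : nzRingType) (n m : nat) (lam1 lam2 : R)
  (psi : 'cV[R]_(m.+1 * n.+1)) (k : nat) : 'cV[R]_n.+1 :=
  qaux lam1 lam2 psi (m - k).

Fixpoint rrec (R : nzRingType) (n : nat) (lam1 : R) (v : 'cV[R]_n.+1) (j : nat) : R :=
  match j with
  | 0 => v (inord 0) 0
  | j'.+1 => lam1 * rrec lam1 v j' + v (inord j'.+1) 0
  end.

Fixpoint saux (R : nzRingType) (n : nat) (lam1 : R) (v : 'cV[R]_n.+1) (d : nat) : R :=
  match d with
  | 0 => 0
  | d'.+1 => lam1 * (saux lam1 v d' + v (inord (n - d')) 0)
  end.

Definition srec (R : nzRingType) (n : nat) (lam1 : R) (v : 'cV[R]_n.+1) (j : nat) : R :=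
  saux lam1 v (n - j).

(* Operation-counting model: a computation returns (result, #ops).    *)
Definition Cost (A : Type) : Type := (A * nat)%type.
Definition cret (A : Type) (a : A) : Cost A := (a, 0%N).
Definition cbind (A B : Type) (c : Cost A) (f : A -> Cost B) : Cost B :=
  let: (a, k) := c in let: (b, l) := f a in (b, (k + l)%N).
Definition cadd (R : nzRingType) (x y : R) : Cost R := (x + y, 1%N).
Definition cmul (R : nzRingType) (x y : R) : Cost R := (x * y, 1%N).

Fixpoint vaddC (R : nzRingType) (a b : seq R) : Cost (seq R) :=
  match a, b with
  | x :: a', y :: b' =>
      cbind (cadd x y) (fun z => cbind (vaddC a' b') (fun zs => cret (z :: zs)))
  | _, _ => cret [::]
  end.

Fixpoint vscaleC (R : nzRingType) (l : R) (a : seq R) : Cost (seq R) :=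
  match a with
  | x :: a' => cbind (cmul l x) (fun z => cbind (vscaleC l a') (fun zs => cret (z :: zs)))
  | [::] => cret [::]
  end.

Fixpoint fwdC (R : nzRingType) (l prev : R) (v : seq R) : Cost (seq R) :=
  match v with
  | x :: v' =>
      cbind (cmul l prev) (fun a => cbind (cadd a x) (fun r =>
        cbind (fwdC l r v') (fun rs => cret (r :: rs))))
  | [::] => cret [::]
  end.

Definition rC (R : nzRingType) (l : R) (v : seq R) : Cost (seq R) :=
  match v with
  | x :: v' => cbind (fwdC l x v') (fun rs => cret (x :: rs))
  | [::] => cret [::]
  end.

Fixpoint sC (R : nzRingType) (l : R) (v : seq R) : Cost (seq R) :=
  match v with
  | [::] => cret [::]
  | [:: _] => cret [:: 0]
  | _ :: ((y :: _) as v') =>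
      cbind (sC l v') (fun ss =>
        cbind (cadd (head 0 ss) y) (fun t =>
          cbind (cmul l t) (fun s => cret (s :: ss))))
  end.

Definition fastK0 (R : nzRingType) (l1 : R) (v : seq R) : Cost (seq R) :=
  cbind (rC l1 v) (fun r => cbind (sC l1 v) (fun s => vaddC r s)).

Fixpoint mapC (A B : Type) (f : A -> Cost B) (s : seq A) : Cost (seq B) :=
  match s with
  | x :: s' => cbind (f x) (fun y => cbind (mapC f s') (fun ys => cret (y :: ys)))
  | [::] => cret [::]
  end.

Fixpoint pfwdC (R : nzRingType) (l2 : R) (prev : seq R) (us : seq (seq R))
  : Cost (seq (seq R)) :=
  match us with
  | u :: us' =>
      cbind (vscaleC l2 prev) (fun a => cbind (vaddC a u) (fun p =>
        cbind (pfwdC l2 p us') (fun ps => cret (p :: ps))))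
  | [::] => cret [::]
  end.

Definition pC (R : nzRingType) (l2 : R) (us : seq (seq R)) : Cost (seq (seq R)) :=
  match us with
  | u :: us' => cbind (pfwdC l2 u us') (fun ps => cret (u :: ps))
  | [::] => cret [::]
  end.

Fixpoint qC (R : nzRingType) (nN : nat) (l2 : R) (us : seq (seq R))
  : Cost (seq (seq R)) :=
  match us with
  | [::] => cret [::]
  | [:: _] => cret [:: nseq nN 0]
  | _ :: ((u :: _) as us') =>
      cbind (qC nN l2 us') (fun qs =>
        cbind (vaddC (head [::] qs) u) (fun t =>
          cbind (vscaleC l2 t) (fun q => cret (q :: qs))))
  end.

Fixpoint vvaddC (R : nzRingType) (a b : seq (seq R)) : Cost (seq (seq R)) :=
  match a, b with
  | x :: a', y :: b' =>
      cbind (vaddC x y) (fun z => cbind (vvaddC a' b') (fun zs => cret (z :: zs)))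
  | _, _ => cret [::]
  end.

Definition fastK (R : nzRingType) (nN : nat) (l1 l2 : R) (blocks : seq (seq R))
  : Cost (seq R) :=
  cbind (mapC (fastK0 l1) blocks) (fun us =>
    cbind (pC l2 us) (fun ps =>
      cbind (qC nN l2 us) (fun qs =>
        cbind (vvaddC ps qs) (fun bs => cret (flatten bs))))).

Definition psiblocks (R : nzRingType) (n m : nat) (psi : 'cV[R]_(m.+1 * n.+1))
  : seq (seq R) :=
  [seq [seq psi (mxvec_index k i) 0 | i <- enum 'I_n.+1] | k <- enum 'I_m.+1].

Definition colseq (R : nzRingType) (p : nat) (v : 'cV[R]_p) : seq R :=
  [seq v x 0 | x <- enum 'I_p].

(* Main.v *)
Require Import Defs.
From HB Require Import structures.
From mathcomp Require Import all_boot all_order all_algebra.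
From mathcomp Require Import reals.
From mathcomp Require Import sequences exp.
From mathcomp Require Import zify.
Import Order.TTheory GRing.Theory Num.Theory.
Local Open Scope ring_scope.

Lemma index_allpairs (T1 T2 : eqType) (s1 : seq T1) (s2 : seq T2) i j :
  uniq s1 -> i \in s1 -> j \in s2 ->
  index (i, j) [seq (x, y) | x <- s1, y <- s2] = (index i s1 * size s2 + index j s2)%N.
Proof.
elim: s1 => //= x s1 IH /andP[xs1 u1]; rewrite inE => /orP[/eqP->|is1] js2.
  rewrite index_cat /= eqxx /= mul0n add0n.
  have -> : (x, j) \in [seq (x, y) | y <- s2] by apply: map_f.
  by rewrite (index_map (fun a b (e : (x, a) = (x, b)) => f_equal snd e)).
rewrite index_cat.
have xi : (x == i) = false by apply/negbTE/eqP => e; rewrite e is1 in xs1.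
have -> : ((i, j) \in [seq (x, y) | y <- s2]) = false.
  by apply/negbTE/negP => /mapP[y _ [e _]]; rewrite e eqxx in xi.
by rewrite size_map IH // xi mulSn addnA.
Qed.

Lemma val_enum_rank (T : finType) (x : T) : val (enum_rank x) = index x (enum T).
Proof.
rewrite -{2}(nth_enum_rank x x) index_uniq ?enum_uniq // -cardE ?ltn_ord. by [].
Qed.

Lemma val_mxvec_index m n (i : 'I_m) (j : 'I_n) :
  nat_of_ord (mxvec_index i j) = (i * n + j)%N.
Proof.
rewrite /mxvec_index /= val_enum_rank enumT unlock /= /prod_enum.
by rewrite index_allpairs ?enum_uniq ?mem_enum // !index_enum_ord size_enum_ord.
Qed.
Section K0.
Variables (R : comNzRingType) (n : nat) (l : R) (v : 'cV[R]_n.+1).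

Lemma rrecE j : rrec l v j = \sum_(0 <= i < j.+1) l ^+ (j - i) * v (inord i) 0.
Proof.
elim: j => [|j IH] /=; first by rewrite big_nat1 expr0 mul1r.
rewrite big_nat_recr //= subnn expr0 mul1r IH mulr_sumr; congr (_ + _).
apply: eq_big_nat => i /andP[_ hi].
by rewrite mulrA -exprS; congr (_ ^+ _ * _); lia.
Qed.

Lemma sauxE d : (d <= n)%N ->
  saux l v d = \sum_(n.+1 - d <= i < n.+1) l ^+ (i - (n - d)) * v (inord i) 0.
Proof.
elim: d => [|d IH] hd /=; first by rewrite subn0 big_geq.
rewrite IH ?(ltnW hd) // (@big_ltn _ _ _ (n.+1 - d.+1)) /=; last by lia.
rewrite subSS -subSn ?(ltnW hd) //.
rewrite mulrDr mulr_sumr addrC; congr (_ + _).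
  have -> : (n - d - (n - d.+1) = 1)%N by lia.
  by rewrite expr1.
apply: eq_big_nat => i /andP[h1 h2].
by rewrite mulrA -exprS; congr (_ ^+ _ * _); lia.
Qed.

Lemma srecE j : (j <= n)%N ->
  srec l v j = \sum_(j.+1 <= i < n.+1) l ^+ (i - j) * v (inord i) 0.
Proof.
move=> hj; rewrite /srec sauxE ?leq_subr //.
have -> : (n.+1 - (n - j) = j.+1)%N by lia.
by have -> : (n - (n - j) = j)%N by lia.
Qed.

Lemma K0_rs (j : 'I_n.+1) :
  (K0mx n l *m v) j 0 = rrec l v j + srec l v j.
Proof.
have hj : (j <= n)%N by rewrite -ltnS.
rewrite mxE rrecE srecE //.
rewrite (eq_bigr (fun i : 'I_n.+1 => l ^+ ndist j i * v (inord i) 0)); last first.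
  by move=> i _; rewrite mxE inord_val.
rewrite -(big_mkord xpredT (fun i => l ^+ ndist j i * v (inord i) 0)).
rewrite (big_cat_nat _ (n := j.+1)) //=.
congr (_ + _); apply: eq_big_nat => i /andP[h1 h2]; congr (_ ^+ _ * _);
  rewrite /ndist; lia.
Qed.
End K0.
Lemma split_dist (R : comNzRingType) (l : R) n (j : nat) (F : nat -> R) : (j <= n)%N ->
  \sum_(i < n.+1) l ^+ ndist j i * F i =
  \sum_(0 <= i < j.+1) l ^+ (j - i) * F i + \sum_(j.+1 <= i < n.+1) l ^+ (i - j) * F i.
Proof.
move=> hj.
rewrite -(big_mkord xpredT (fun i => l ^+ ndist j i * F i)).
rewrite (big_cat_nat _ (n := j.+1)) //=.
congr (_ + _); apply: eq_big_nat => i /andP[h1 h2]; congr (_ ^+ _ * _);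
  rewrite /ndist; lia.
Qed.

Section Blk.
Variables (R : comNzRingType) (n m : nat) (l1 l2 : R) (psi : 'cV[R]_(m.+1 * n.+1)).
Let U (b : nat) := K0mx n l1 *m psiblk psi b.

Lemma Kpsi_block (k : 'I_m.+1) (i : 'I_n.+1) :
  (Kmx n m l1 l2 *m psi) (mxvec_index k i) 0 =
  \sum_(b < m.+1) l2 ^+ ndist k b * U b i 0.
Proof.
rewrite mxE (reindex _ (curry_mxvec_bij _ _)) /=.
set F := fun (b : 'I_m.+1) (j : 'I_n.+1) => Kmx n m l1 l2 (mxvec_index k i) (mxvec_index b j) * psi (mxvec_index b j) 0.
transitivity (\sum_(b < m.+1) \sum_(j < n.+1) F b j).
  by rewrite pair_bigA; apply: eq_bigr => -[b j] _.
apply: eq_bigr => b _; rewrite /U mxE mulr_sumr; apply: eq_bigr => j _.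
rewrite /F !mxE; rewrite !val_mxvec_index !divnMDl // !modnMDl !divn_small ?modn_small // !addn0.
by rewrite !inord_val mulrA.
Qed.

Lemma pvecE k : pvec l1 l2 psi k = \sum_(0 <= b < k.+1) l2 ^+ (k - b) *: U b.
Proof.
elim: k => [|k IH] /=; first by rewrite big_nat1 expr0 scale1r.
rewrite big_nat_recr //= subnn expr0 scale1r IH scaler_sumr; congr (_ + _).
apply: eq_big_nat => i /andP[_ hi].
by rewrite scalerA -exprS; congr (_ ^+ _ *: _); lia.
Qed.

Lemma qauxE d : (d <= m)%N ->
  qaux l1 l2 psi d = \sum_(m.+1 - d <= b < m.+1) l2 ^+ (b - (m - d)) *: U b.
Proof.
elim: d => [|d IH] hd /=; first by rewrite subn0 big_geq.
rewrite IH ?(ltnW hd) // (@big_ltn _ _ _ (m.+1 - d.+1)) /=; last by lia.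
rewrite subSS -subSn ?(ltnW hd) //.
rewrite scalerDr scaler_sumr addrC; congr (_ + _).
  have -> : (m - d - (m - d.+1) = 1)%N by lia.
  by rewrite expr1.
apply: eq_big_nat => i /andP[h1 h2].
by rewrite scalerA -exprS; congr (_ ^+ _ *: _); lia.
Qed.

Lemma qvecE k : (k <= m)%N ->
  qvec l1 l2 psi k = \sum_(k.+1 <= b < m.+1) l2 ^+ (b - k) *: U b.
Proof.
move=> hk; rewrite /qvec qauxE ?leq_subr //.
have -> : (m.+1 - (m - k) = k.+1)%N by lia.
by have -> : (m - (m - k) = k)%N by lia.
Qed.

Lemma block_pq (k : 'I_m.+1) (i : 'I_n.+1) :
  (Kmx n m l1 l2 *m psi) (mxvec_index k i) 0
  = (pvec l1 l2 psi k + qvec l1 l2 psi k) i 0.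
Proof.
have hk : (k <= m)%N by rewrite -ltnS.
rewrite Kpsi_block pvecE qvecE // mxE !summxE.
rewrite (@split_dist _ l2 m k (fun b => U b i 0)) //.
by congr (_ + _); apply: eq_bigr => b _; rewrite [in RHS]mxE.
Qed.
End Blk.
Section Cost.
Variable R : nzRingType.

Lemma vaddC_map (T : Type) (s : seq T) (f g : T -> R) :
  vaddC [seq f j | j <- s] [seq g j | j <- s] = ([seq f j + g j | j <- s], size s).
Proof. by elim: s => //= x s ->; rewrite /= addn0 add1n. Qed.

Lemma vscaleC_map (T : Type) (s : seq T) (l : R) (f : T -> R) :
  vscaleC l [seq f j | j <- s] = ([seq l * f j | j <- s], size s).
Proof. by elim: s => //= x s ->; rewrite /= addn0 add1n. Qed.

Lemma fwdC_spec (l : R) (f x : nat -> R) a c :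
  (forall j, f j.+1 = l * f j + x j.+1) ->
  fwdC l (f a) [seq x j | j <- iota a.+1 c] = ([seq f j | j <- iota a.+1 c], (2 * c)%N).
Proof.
move=> Hf; elim: c a => [|c IH] a //=.
by rewrite -Hf IH /=; congr (_, _); lia.
Qed.

Lemma sC_spec (l : R) (s x : nat -> R) a c :
  s (a + c)%N = 0 -> (forall j, (j < a + c)%N -> s j = l * (s j.+1 + x j.+1)) ->
  sC l [seq x j | j <- iota a c.+1] = ([seq s j | j <- iota a c.+1], (2 * c)%N).
Proof.
elim: c a => [|c IH] a H0 Hs; first by rewrite /= -H0 addn0.
have := IH a.+1; rewrite addSnnS => /(_ H0 Hs) /= ->.
rewrite /= -Hs; last by lia.
by congr (_, _); lia.
Qed.

Lemma pfwdC_spec (l : R) (T : Type) (s : seq T) (p u : nat -> T -> R) a c :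
  (forall k j, p k.+1 j = l * p k j + u k.+1 j) ->
  pfwdC l [seq p a j | j <- s] [seq [seq u k j | j <- s] | k <- iota a.+1 c]
  = ([seq [seq p k j | j <- s] | k <- iota a.+1 c], (c * (2 * size s))%N).
Proof.
move=> Hp; elim: c a => [|c IH] a //=.
rewrite vscaleC_map /= vaddC_map /=.
have -> : [seq l * p a j + u a.+1 j | j <- s] = [seq p a.+1 j | j <- s].
  by apply: eq_map => j; rewrite Hp.
by rewrite IH /=; congr (_, _); lia.
Qed.

Lemma map_cst (T : Type) (s : seq T) (f : T -> R) :
  (forall j, f j = 0) -> [seq f j | j <- s] = nseq (size s) 0.
Proof. by move=> H; elim: s => //= x s ->; rewrite H. Qed.

Lemma qC_spec (l : R) (T : Type) (s : seq T) (q u : nat -> T -> R) a c :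
  (forall j, q (a + c)%N j = 0) ->
  (forall k j, (k < a + c)%N -> q k j = l * (q k.+1 j + u k.+1 j)) ->
  qC (size s) l [seq [seq u k j | j <- s] | k <- iota a c.+1]
  = ([seq [seq q k j | j <- s] | k <- iota a c.+1], (c * (2 * size s))%N).
Proof.
elim: c a => [|c IH] a H0 Hq.
  by rewrite /= (@map_cst _ s (q a)) // => j; rewrite -(H0 j) addn0.
have := IH a.+1; rewrite addSnnS => /(_ H0 Hq) /= ->.
rewrite /= vaddC_map /= vscaleC_map /=.
have -> : [seq l * (q a.+1 j + u a.+1 j) | j <- s] = [seq q a j | j <- s].
  by apply: eq_map => j; rewrite [in RHS]Hq //; lia.
by congr (_, _); lia.
Qed.

Lemma vvaddC_spec (T1 T2 : Type) (t : seq T1) (s : seq T2) (f g : T1 -> T2 -> R) :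
  vvaddC [seq [seq f k j | j <- s] | k <- t] [seq [seq g k j | j <- s] | k <- t]
  = ([seq [seq f k j + g k j | j <- s] | k <- t], (size t * size s)%N).
Proof.
elim: t => //= k t IH; rewrite vaddC_map /= IH /=; congr (_, _); lia.
Qed.

Lemma mapC_spec (A B T : Type) (t : seq T) (f : A -> Cost B) (g : T -> A) (h : T -> B) c0 :
  (forall k, f (g k) = (h k, c0)) ->
  mapC f [seq g k | k <- t] = ([seq h k | k <- t], (size t * c0)%N).
Proof.
move=> H; elim: t => //= k t IH; rewrite H /= IH /=; congr (_, _); lia.
Qed.
End Cost.
Lemma fastK_spec (R : nzRingType) nN (l1 l2 : R) blocks us c1 ps c2 qs c3 bs c4 :
  mapC (fastK0 l1) blocks = (us, c1) -> pC l2 us = (ps, c2) ->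
  qC nN l2 us = (qs, c3) -> vvaddC ps qs = (bs, c4) ->
  fastK nN l1 l2 blocks = (flatten bs, (c1 + (c2 + (c3 + (c4 + 0))))%N).
Proof. by move=> H1 H2 H3 H4; rewrite /fastK H1 /= H2 /= H3 /= H4. Qed.

Lemma enum_map_iota (T : Type) p (F : 'I_p -> T) (G : nat -> T) :
  (forall i : 'I_p, G i = F i) -> [seq F i | i <- enum 'I_p] = [seq G j | j <- iota 0 p].
Proof. by move=> H; rewrite -val_enum_ord -map_comp; apply: eq_map => i /=. Qed.

Lemma flatten_blocks (T : Type) (G : nat -> T) N M a :
  flatten [seq [seq G (k * N + j)%N | j <- iota 0 N] | k <- iota a M]
  = [seq G x | x <- iota (a * N) (M * N)].
Proof.
elim: M a => [|M IH] a; first by [].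
rewrite [LHS]/= IH mulSn iotaD map_cat; congr (_ ++ _).
  by rewrite -[(a * N)%N]addn0 iotaDl -map_comp; apply: eq_map => j /=; rewrite addn0.
by rewrite addnC.
Qed.

Lemma pC_spec (R : nzRingType) (l : R) (T : Type) (s : seq T) (p u : nat -> T -> R) c :
  (forall k j, p k.+1 j = l * p k j + u k.+1 j) -> (forall j, p 0%N j = u 0%N j) ->
  pC l [seq [seq u k j | j <- s] | k <- iota 0 c.+1]
  = ([seq [seq p k j | j <- s] | k <- iota 0 c.+1], (c * (2 * size s))%N).
Proof.
move=> Hp H0.
have -> : [seq [seq u k j | j <- s] | k <- iota 0 c.+1]
  = [seq u 0%N j | j <- s] :: [seq [seq u k j | j <- s] | k <- iota 1 c] by [].
have -> : [seq u 0%N j | j <- s] = [seq p 0%N j | j <- s] by apply: eq_map => j; rewrite H0.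
rewrite /pC (@pfwdC_spec _ l _ s p u 0 c Hp) /=; congr (_, _); lia.
Qed.

Lemma fastK0_spec (R : comNzRingType) n (l : R) (v : 'cV[R]_n.+1) :
  fastK0 l [seq v (inord j) 0 | j <- iota 0 n.+1]
  = ([seq (K0mx n l *m v) (inord j) 0 | j <- iota 0 n.+1], (4 * n + n.+1)%N).
Proof.
have Hr : rC l [seq v (inord j) 0 | j <- iota 0 n.+1]
          = ([seq rrec l v j | j <- iota 0 n.+1], (2 * n)%N).
  by rewrite /= (@fwdC_spec _ l (rrec l v) (fun j => v (inord j) 0) 0 n) // /= addn0.
have Hs : sC l [seq v (inord j) 0 | j <- iota 0 n.+1]
          = ([seq srec l v j | j <- iota 0 n.+1], (2 * n)%N).
  apply: (@sC_spec _ l (srec l v) (fun j => v (inord j) 0) 0 n).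
    by rewrite /srec add0n subnn.
  move=> j; rewrite add0n => hj; rewrite /srec -(subnSK hj) /=.
  by have -> : (n - (n - j.+1) = j.+1)%N by lia.
have E : [seq rrec l v j + srec l v j | j <- iota 0 n.+1]
        = [seq (K0mx n l *m v) (inord j) 0 | j <- iota 0 n.+1].
  apply/eq_in_map => j; rewrite mem_iota add0n => hj.
  by rewrite K0_rs inordK.
rewrite /fastK0 Hr Hs -E; set s := iota 0 n.+1.
rewrite /= vaddC_map /s size_iota; congr (_, _); lia.
Qed.

Theorem mainTheorem2 :
  exists C : nat,
  forall (R : realType) (n m : nat) (h1 h2 eps : R),
    0 < h1 -> 0 < h2 -> 0 < eps ->
    let lam1 := expR (- (h1 / eps)) in
    let lam2 := expR (- (h2 / eps)) in
    forall psi : 'cV[R]_(m.+1 * n.+1),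
      (* the k-th block of K psi equals p_k + q_k *)
      (forall (k : 'I_m.+1) (i : 'I_n.+1),
          (Kmx n m lam1 lam2 *m psi) (mxvec_index k i) 0
          = (pvec lam1 lam2 psi k + qvec lam1 lam2 psi k) i 0)
      (* each K0 psi_k is given by the linear-time recursion r + s *)
      /\ (forall (k : 'I_m.+1) (j : 'I_n.+1),
          (K0mx n lam1 *m psiblk psi k) j 0
          = rrec lam1 (psiblk psi k) j + srec lam1 (psiblk psi k) j)
      (* the resulting algorithm computes K psi exactly with O(NM) operations *)
      /\ (fastK n.+1 lam1 lam2 (psiblocks psi)).1 = colseq (Kmx n m lam1 lam2 *m psi)
      /\ ((fastK n.+1 lam1 lam2 (psiblocks psi)).2 <= C * (n.+1 * m.+1))%N.
Proof.
exists 10%N => R n m h1 h2 eps _ _ _ lam1 lam2 psi.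
have HF : forall l1 l2 : R, exists c,
    fastK n.+1 l1 l2 (psiblocks psi) = (colseq (Kmx n m l1 l2 *m psi), c)
    /\ (c <= 10 * (n.+1 * m.+1))%N.
  move=> l1 l2.
  pose u : nat -> nat -> R := fun k j => (K0mx n l1 *m psiblk psi k) (inord j) 0.
  have Hb : psiblocks psi = [seq [seq psiblk psi k (inord j) 0 | j <- iota 0 n.+1]
                              | k <- iota 0 m.+1].
    rewrite /psiblocks (@enum_map_iota _ _ _ (fun k => [seq psiblk psi k (inord j) 0 | j <- iota 0 n.+1])) //.
    move=> k; symmetry; apply: (@enum_map_iota _ _ _ (fun j => psiblk psi k (inord j) 0)) => j.
    by rewrite mxE !inord_val.
  have H1 := @mapC_spec _ _ _ (iota 0 m.+1) (fastK0 l1)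
    (fun k => [seq psiblk psi k (inord j) 0 | j <- iota 0 n.+1])
    (fun k => [seq u k j | j <- iota 0 n.+1]) (4 * n + n.+1)%N
    (fun k => @fastK0_spec _ n l1 (psiblk psi k)).
  pose p : nat -> nat -> R := fun k j => pvec l1 l2 psi k (inord j) 0.
  pose q : nat -> nat -> R := fun k j => qvec l1 l2 psi k (inord j) 0.
  have Hp : forall k j, p k.+1 j = l2 * p k j + u k.+1 j.
    by move=> k j; rewrite /p /u /= !mxE.
  have H2 := @pC_spec _ l2 _ (iota 0 n.+1) p u m Hp (fun j => erefl).
  have Hq0 : forall j, q (0 + m)%N j = 0.
    by move=> j; rewrite /q add0n /qvec subnn /= mxE.
  have Hq : forall k j, (k < 0 + m)%N -> q k j = l2 * (q k.+1 j + u k.+1 j).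
    move=> k j hk; rewrite add0n in hk; rewrite /q /u /qvec -(subnSK hk) /= !mxE.
    by have -> : (m - (m - k.+1) = k.+1)%N by lia.
  have H3 := @qC_spec _ l2 _ (iota 0 n.+1) q u 0 m Hq0 Hq.
  rewrite size_iota in H3.
  have H4 := @vvaddC_spec _ _ _ (iota 0 m.+1) (iota 0 n.+1) p q.
  rewrite Hb (@fastK_spec _ _ _ _ _ _ _ _ _ _ _ _ _ H1 H2 H3 H4).
  eexists; split; [congr (_, _) | ].
  2: by rewrite !size_iota; nia.
  set G := fun x => (Kmx n m l1 l2 *m psi)
                      (mxvec_index (inord (x %/ n.+1) : 'I_m.+1) (inord (x %% n.+1) : 'I_n.+1)) 0.
  rewrite /colseq (@enum_map_iota _ _ _ G); last first.
    move=> i; rewrite /G; congr (_ _ _).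
    apply: ord_inj; rewrite val_mxvec_index !inordK.
    - by rewrite -divn_eq.
    - by rewrite ltn_pmod.
    - by rewrite ltn_divLR // ltn_ord.
  rewrite -(mul0n n.+1) -flatten_blocks; congr flatten.
  apply/eq_in_map => k; rewrite mem_iota add0n => hk.
  apply/eq_in_map => j; rewrite mem_iota add0n => hj.
  rewrite /G divnMDl // modnMDl divn_small // modn_small // addn0.
  rewrite block_pq !mxE !inordK //.
have [c [-> hc]] := HF lam1 lam2.
split; first by move=> k i; apply: block_pq.
split; first by move=> k j; apply: K0_rs.
by split.
Qed.
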